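(* Let $p,q$ be distinct odd primes, $G=\mathrm{Gal}(\mathbb{Q}(\zeta_p)/\mathbb{Q})$ and $\theta=\sum_{\tau\in G}n_\tau\tau\in\mathbb{Z}[G]$. Define the formal power series $$F(T)=\prod_{\tau\in G}(1-\tau(\zeta_p)T)^{n_\tau/q}\in\mathbb{Q}(\zeta_p)[[T]],\qquad (1-\tau(\zeta_p)T)^{n_\tau/q}=\sum_{k\ge0}\binom{n_\tau/q}{k}(-\tau(\zeta_p)T)^k .$$ Then: (a) every coefficient of $F$ is of the form $a/q^s$ with $a\in\mathbb{Z}[\zeta_p]$ and $s\ge0$; (b) $F(T)=\sum_{k\ge0}\frac{a_k}{k!\,q^k}T^k$ with $a_k\in\mathbb{Z}[\zeta_p]$ and $a_k\equiv\bigl(-\sum_{\tau\in G}n_\tau\tau(\zeta_p)\bigr)^k\pmod{q\mathbb{Z}[\zeta_p]}$ for all $k$; (c) for $\sigma\in G$ and $t\in\mathbb{C}$ with $|t|<1$ the series $F^\sigma(t)$ converges; moreover, if $0\le n_\tau\le q$ for all $\tau\in G$, then for every $k\ge0$ $$|F^\sigma(t)-F^\sigma_k(t)|\le\left|\binom{-m}{k+1}\right|\frac{|t|^{k+1}}{(1-|t|)^{m+k+1}},\qquad m=\frac1q\sum_{\tau\in G}n_\tau .$$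
   Context: $\zeta_p=e^{2i\pi/p}$; $\binom{r}{k}=r(r-1)\cdots(r-k+1)/k!$ for rational $r$. $F^\sigma$ is the series obtained by applying $\sigma$ to every coefficient of $F$, and $F^\sigma_k$ is the polynomial formed by the terms of $F^\sigma$ of degree at most $k$. *)

(* Defs.v *)
From HB Require Import structures.
From mathcomp Require Import all_boot all_order all_algebra.
From mathcomp Require Import all_classical all_reals all_analysis.
From mathcomp Require Import complex.
Unset Printing Implicit Defensive.
Import Order.TTheory GRing.Theory Num.Theory.
Import numFieldNormedType.Exports.
Local Open Scope ring_scope.

(* the complex numbers, as R[i] viewed as a numClosedFieldType
   (this makes the canonical norm topology of MathComp-Analysis available) *)
Definition cplx (R : realType) : numClosedFieldType := R[i].

Definition zeta (R : realType) (p : nat) : cplx R :=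
  Complex (cos (2 * pi / p%:R)) (sin (2 * pi / p%:R)).

Definition binr {F : fieldType} (r : F) (k : nat) : F :=
  (\prod_(i < k) (r - i%:R)) / (k`!)%:R.

Definition inZzeta (R : realType) (p : nat) (x : cplx R) : Prop :=
  exists c : nat -> int, x = \sum_(i < p) (c i)%:~R * zeta R p ^+ i.

(* formal power series over R[i] as coefficient sequences; Cauchy product *)
Definition ps_mul (R : realType) (f g : nat -> cplx R) : nat -> cplx R :=
  fun k => \sum_(i < k.+1) f i * g (k - i)%N.
Definition ps_one (R : realType) : nat -> cplx R := fun k => (k == 0%N)%:R.

(* (1 - c T)^r = sum_k binom(r,k) (-c T)^k *)
Definition binom_series (R : realType) (r c : cplx R) : nat -> cplx R :=
  fun k => binr r k * (- c) ^+ k.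

(* The Galois group G = Gal(Q(zeta_p)/Q) is identified with (Z/pZ)^x:
   a : 'I_p with 0 < a corresponds to tau_a : zeta_p |-> zeta_p^a.
   Fser p q n s is F^sigma for sigma = tau_s (so F = Fser p q n 1):
   prod_{a} (1 - sigma(tau_a(zeta_p)) T)^{n_a/q}, sigma(tau_a zeta) = zeta^(s*a). *)
Definition Fser (R : realType) (p q : nat) (n : 'I_p -> int) (s : nat)
  : nat -> cplx R :=
  \big[ps_mul R/ps_one R]_(a < p | (0 < a)%N)
     binom_series R ((n a)%:~R / q%:R) (zeta R p ^+ (s * a)).

(* Main.v *)
Require Import Defs.
From HB Require Import structures.
From mathcomp Require Import all_boot all_order all_algebra.
From mathcomp Require Import all_classical all_reals all_analysis.
From mathcomp Require Import complex.
From mathcomp Require Import ring lra zify.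
Import Order.TTheory GRing.Theory Num.Theory.
Import numFieldNormedType.Exports.
Local Open Scope ring_scope.
Lemma prod_const_ord (R : pzSemiRingType) k (x : R) : \prod_(i < k) x = x ^+ k.
Proof. by rewrite prodr_const card_ord. Qed.

Lemma prod_dvd_congr (m : int) (k : nat) (a b : nat -> int) :
  (forall i, (i < k)%N -> (m %| a i - b i)%Z) ->
  (m %| \prod_(i < k) a i - \prod_(i < k) b i)%Z.
Proof.
elim: k => [|k IH] H; first by rewrite !big_ord0 subrr dvdz0.
rewrite !big_ord_recr /=.
have -> : \prod_(i < k) a i * a k - \prod_(i < k) b i * b k =
  (\prod_(i < k) a i - \prod_(i < k) b i) * a k + \prod_(i < k) b i * (a k - b k).
  by ring.
apply: rpredD; first by apply: dvdz_mulr; apply: IH => i ik; apply: H; exact: ltnW.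
by apply: dvdz_mull; apply: H.
Qed.

Lemma ffact_dvd_int (N k : nat) : ((k`!)%:Z %| \prod_(i < k) (N%:Z - i%:Z))%Z.
Proof.
case: (ltnP N k) => Nk.
  rewrite (bigD1 (Ordinal Nk)) //= subrr mul0r; exact: dvdz0.
have -> : \prod_(i < k) (N%:Z - i%:Z) = (N ^_ k)%:Z.
  rewrite ffact_prod rmorph_prod /=; apply: eq_bigr => i _.
  by rewrite subzn // ltnW // (leq_trans (ltn_ord i)).
by rewrite -bin_ffact PoszM; apply: dvdz_mull; exact: dvdzz.
Qed.

Lemma nt_main (n : int) (k q : nat) : prime q ->
  exists M : int, exists e : nat,
    \prod_(i < k) (n - (i * q)%N%:Z) * (q ^ e)%N%:Z = (k`!)%N%:Z * M.
Proof.
move=> pq.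
set f := k`!.
have f0 : (0 < f)%N by exact: fact_gt0.
set m := (f`_q^')%N.
have fE : f = (q ^ logn q f * m)%N by rewrite -p_part partnC.
have m0 : (0 < m)%N by rewrite /m part_gt0.
have cop : coprime m q.
  rewrite coprime_sym prime_coprime // -p'natE //; exact: part_pnat.
have [u [v Huv]] := Bezoutz m%:Z q%:Z.
have g1 : gcdz m%:Z q%:Z = 1 by rewrite /gcdz /= (eqP cop).
rewrite g1 in Huv.
set N := ((n * v) %% m%:Z)%Z.
have mz : m%:Z != 0 by rewrite eqz_nat -lt0n.
have N0 : 0 <= N by apply: modz_ge0.
have dvd1 : (m%:Z %| \prod_(i < k) (n - (i * q)%N%:Z)
                    - \prod_(i < k) (N * q%:Z - (i * q)%N%:Z))%Z.
  apply: (@prod_dvd_congr _ k (fun i : nat => n - (i * q)%N%:Z)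
           (fun i : nat => N * q%:Z - (i * q)%N%:Z)) => i _.
  have -> : n - (i * q)%N%:Z - (N * q%:Z - (i * q)%N%:Z) = n - N * q%:Z by ring.
  have E2 := divz_eq (n * v) m%:Z.
  set D := ((n * v) %/ m%:Z)%Z in E2.
  have -> : n - N * q%:Z = (n * u + D * q%:Z) * m%:Z.
    apply/eqP; rewrite -subr_eq0.
    have -> : n - N * q%:Z - (n * u + D * q%:Z) * m%:Z =
       n - n * (u * m%:Z + v * q%:Z) + q%:Z * (n * v - (D * m%:Z + N)) by ring.
    by rewrite Huv -E2 !subrr mulr0 mulr1 subrr addr0.
  exact: dvdz_mull (dvdzz _).
have dvd2 : (m%:Z %| \prod_(i < k) (N * q%:Z - (i * q)%N%:Z))%Z.
  have -> : \prod_(i < k) (N * q%:Z - (i * q)%N%:Z) =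
      (q%:Z ^+ k) * \prod_(i < k) (`|N|%N%:Z - i%:Z).
    rewrite -prod_const_ord -big_split /=; apply: eq_bigr => i _.
    by rewrite gez0_abs // PoszM; ring.
  apply: dvdz_mull; apply: dvdz_trans (ffact_dvd_int _ _).
  by rewrite -/f fE PoszM; apply: dvdz_mull; exact: dvdzz.
have := rpredB dvd2 dvd1; set P1 := \prod_(i < k) (n - _); set P2 := \prod_(i < k) _.
have -> : P2 - (P1 - P2) = - P1 + 2%:R * P2 by ring.
move=> H; have := rpredB H (dvdz_mull 2%:R dvd2).
rewrite addrK rpredN => /dvdzP [M HM].
exists M, (logn q f); set e := logn q f in fE *; rewrite HM fE !PoszM; ring.
Qed.
Lemma zetaX (R : realType) (p j : nat) :
  zeta R p ^+ j = Complex (cos (j%:R * (2 * pi / p%:R))) (sin (j%:R * (2 * pi / p%:R))).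
Proof.
elim: j => [|j IH]; first by rewrite expr0 mul0r cos0 sin0.
rewrite exprS IH /zeta.
set t := 2 * pi / p%:R.
have -> : j.+1%:R * t = t + j%:R * t by rewrite -nat1r mulrDl mul1r.
rewrite cosD sinD.
simpc. congr Complex; ring.
Qed.

Lemma zetaXp (R : realType) (p : nat) : (0 < p)%N -> zeta R p ^+ p = 1.
Proof.
move=> p0; rewrite zetaX.
have -> : p%:R * (2 * pi / p%:R) = pi *+ 2 :> R.
  by rewrite mulrCA mulfV ?pnatr_eq0 -?lt0n // mulr1 mulr_natl.
by rewrite cos2pi sin2pi.
Qed.

Lemma zetaXmod (R : realType) (p j : nat) : (0 < p)%N -> zeta R p ^+ j = zeta R p ^+ (j %% p).
Proof.
move=> p0; rewrite {1}(divn_eq j p) exprD mulnC exprM zetaXp // expr1n mul1r //.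
Qed.

Lemma normc_zetaX (R : realType) (p j : nat) : Normc.normc (zeta R p ^+ j) = 1.
Proof. by rewrite zetaX /= cos2Dsin2 sqrtr1. Qed.

Definition Zz (R : realType) (p : nat) (x : cplx R) : Prop :=
  exists P : {poly int}, x = (map_poly (intr : int -> cplx R) P).[zeta R p].

Lemma Zz_int (R : realType) p (z : int) : Zz R p z%:~R.
Proof. by exists z%:P; rewrite map_polyC hornerC. Qed.

Lemma Zz_zeta (R : realType) p : Zz R p (zeta R p).
Proof. by exists 'X; rewrite map_polyX hornerX. Qed.

Lemma Zz_add (R : realType) p x y : Zz R p x -> Zz R p y -> Zz R p (x + y).
Proof. by move=> [P ->] [Q ->]; exists (P + Q); rewrite rmorphD hornerD. Qed.

Lemma Zz_mul (R : realType) p x y : Zz R p x -> Zz R p y -> Zz R p (x * y).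
Proof. by move=> [P ->] [Q ->]; exists (P * Q); rewrite rmorphM hornerM. Qed.

Lemma Zz_opp (R : realType) p x : Zz R p x -> Zz R p (- x).
Proof. by move=> [P ->]; exists (- P); rewrite rmorphN hornerN. Qed.

Lemma Zz_nat (R : realType) p (k : nat) : Zz R p k%:R.
Proof. by have := Zz_int R p k; rewrite pmulrn. Qed.

Lemma Zz_exp (R : realType) p x k : Zz R p x -> Zz R p (x ^+ k).
Proof.
move=> H; elim: k => [|k IH]; first by rewrite expr0; exact: Zz_nat R p 1.
by rewrite exprS; apply: Zz_mul.
Qed.

Lemma Zz_muln (R : realType) p x k : Zz R p x -> Zz R p (x *+ k).
Proof. by move=> H; rewrite -mulr_natr; apply: Zz_mul => //; exact: Zz_nat. Qed.

Lemma Zz_sum (R : realType) p (I : Type) (r : seq I) (P : pred I) (F : I -> cplx R) :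
  (forall i, P i -> Zz R p (F i)) -> Zz R p (\sum_(i <- r | P i) F i).
Proof.
move=> H; apply: (big_ind (Zz R p)) => //; first exact: (Zz_nat R p 0).
exact: Zz_add.
Qed.

Lemma Zz_inZzeta (R : realType) p x : (0 < p)%N -> Zz R p x -> inZzeta R p x.
Proof.
move=> p0 [P ->].
rewrite (horner_coef_wide _ (size_poly _ _)).
pose s := fun i : 'I_(size P) => (Ordinal (ltn_pmod i p0) : 'I_p).
exists (fun j => if (j < p)%N then \sum_(i < size P | (i %% p)%N == j) P`_i else 0).
rewrite (partition_big s xpredT) //=.
apply: eq_bigr => j _; rewrite ltn_ord rmorph_sum /= mulr_suml.
apply: eq_bigr => i /eqP <-.
by rewrite coef_map /=; congr (_ * _); apply: zetaXmod.
Qed.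

Lemma natq_neq0 (R : realType) (q s : nat) : (0 < q)%N -> ((q ^ s)%N%:R : cplx R) != 0.
Proof. by move=> q0; rewrite pnatr_eq0 -lt0n expn_gt0 q0. Qed.

Lemma fact_neq0 (R : realType) (k : nat) : ((k`!)%N%:R : cplx R) != 0.
Proof. by rewrite pnatr_eq0 -lt0n fact_gt0. Qed.

Lemma binr_int (R : realType) (n : int) (q k : nat) : (0 < q)%N ->
  binr ((n%:~R / q%:R) : cplx R) k =
  (\prod_(i < k) (n - (i * q)%N%:Z))%:~R / ((k`! * q ^ k)%N)%:R.
Proof.
move=> q0; rewrite /binr.
have qn0 : (q%:R : cplx R) != 0 by have := natq_neq0 R q 1 q0; rewrite expn1.
have -> : \prod_(i < k) (n%:~R / q%:R - i%:R) =
    \prod_(i < k) ((n - (i * q)%N%:Z)%:~R * (q%:R : cplx R)^-1).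
  apply: eq_bigr => i _; rewrite intrB /= -pmulrn natrM; field => //.
rewrite big_split /= prod_const_ord rmorph_prod /= natrM natrX.
by rewrite exprVn -mulrA -invfM [_ ^+ k * _]mulrC.
Qed.

Lemma prod_mod_q (n : int) (k q : nat) :
  ((q%:Z) %| \prod_(i < k) (n - (i * q)%N%:Z) - n ^+ k)%Z.
Proof.
rewrite -prod_const_ord.
apply: (@prod_dvd_congr _ k (fun i : nat => n - (i * q)%N%:Z) (fun=> n)) => i _.
rewrite addrAC subrr add0r rpredN PoszM; exact: dvdz_mull (dvdzz _).
Qed.

Definition Zq (R : realType) (p q : nat) (x : cplx R) : Prop :=
  exists a s, Zz R p a /\ x = a / (q ^ s)%N%:R.

Lemma Zq_Zz (R : realType) p q x : Zz R p x -> Zq R p q x.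
Proof. by move=> H; exists x, 0%N; rewrite expn0 divr1. Qed.

Lemma Zq_add (R : realType) p q x y : (0 < q)%N -> Zq R p q x -> Zq R p q y -> Zq R p q (x + y).
Proof.
move=> q0 [a [s [Ha ->]]] [b [t [Hb ->]]].
exists (a * (q ^ t)%N%:R + b * (q ^ s)%N%:R), (s + t)%N; split.
  by apply: Zz_add; apply: Zz_mul => //; exact: Zz_nat.
rewrite expnD natrM; field; rewrite !natq_neq0 //.
Qed.

Lemma Zq_mul (R : realType) p q x y : (0 < q)%N -> Zq R p q x -> Zq R p q y -> Zq R p q (x * y).
Proof.
move=> q0 [a [s [Ha ->]]] [b [t [Hb ->]]].
exists (a * b), (s + t)%N; split; first exact: Zz_mul.
rewrite expnD natrM; field; rewrite !natq_neq0 //.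
Qed.

Lemma Zq_sum (R : realType) p q (I : Type) (r : seq I) (P : pred I) (F : I -> cplx R) :
  (0 < q)%N -> (forall i, P i -> Zq R p q (F i)) -> Zq R p q (\sum_(i <- r | P i) F i).
Proof.
move=> q0 H; apply: (big_ind (Zq R p q)) => //.
  by apply: Zq_Zz; exact: (Zz_nat R p 0).
by move=> x y; apply: Zq_add.
Qed.

Lemma Fser_a (R : realType) (p q : nat) (n : 'I_p -> int) (s : nat) :
  prime q -> forall k, Zq R p q (Fser R p q n s k).
Proof.
move=> pq; have q0 := prime_gt0 pq.
rewrite /Fser; apply: (big_ind (fun f : nat -> cplx R => forall k, Zq R p q (f k))).
- by move=> k; apply: Zq_Zz; exact: Zz_nat.
- move=> f g Hf Hg k; rewrite /ps_mul; apply: Zq_sum => // i _.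
  by apply: Zq_mul.
- move=> a _ k; rewrite /binom_series binr_int //.
  have [M [e HM]] := nt_main (n a) k q pq.
  exists (M%:~R * (- zeta R p ^+ (s * a)) ^+ k), (e + k)%N; split.
    apply: Zz_mul; first exact: Zz_int.
    by apply: Zz_exp; apply: Zz_opp; apply: Zz_exp; exact: Zz_zeta.
  have : ((\prod_(i < k) (n a - (i * q)%N%:Z) * (q ^ e)%N%:Z)%:~R : cplx R)
          = ((k`!)%N%:Z * M)%:~R by rewrite HM.
  rewrite !intrM /= => HM'.
  have -> : ((\prod_(i < k) (n a - (i * q)%N%:Z))%:~R : cplx R) =
            ((k`!)%N%:Z)%:~R * M%:~R / ((q ^ e)%N%:Z)%:~R.
    rewrite -HM'; field; exact: natq_neq0.
  rewrite -!pmulrn expnD !natrM. field.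
  by rewrite fact_neq0 !natq_neq0.
Qed.

Definition Kb (R : realType) (p q : nat) (f : nat -> cplx R) (x : cplx R) : Prop :=
  Zz R p x /\ exists A B : nat -> cplx R, forall k,
    [/\ Zz R p (A k), Zz R p (B k), f k = A k / (k`! * q ^ k)%N%:R &
        A k - x ^+ k = q%:R * B k].

Lemma Kb_one (R : realType) p q : Kb R p q (ps_one R) 0.
Proof.
split; first exact: (Zz_nat R p 0).
exists (fun k => (k == 0%N)%:R), (fun=> 0) => k; split.
- exact: Zz_nat.
- exact: (Zz_nat R p 0).
- by rewrite /ps_one; case: k => [|k] //=; rewrite ?mul0r // fact0 expn0 divr1.
- by rewrite expr0n subrr mulr0.
Qed.

Lemma Kb_mul (R : realType) p q f g x y : (0 < q)%N ->
  Kb R p q f x -> Kb R p q g y -> Kb R p q (ps_mul R f g) (x + y).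
Proof.
move=> q0 [Hx [A [B HAB]]] [Hy [A' [B' HAB']]]; split; first exact: Zz_add.
exists (fun k => \sum_(i < k.+1) (A i * A' (k - i)%N) *+ 'C(k, i)).
exists (fun k => \sum_(i < k.+1) (B i * A' (k - i)%N + x ^+ i * B' (k - i)%N) *+ 'C(k, i)).
move=> k; split.
- apply: Zz_sum => i _; apply: Zz_muln; apply: Zz_mul.
    by case: (HAB i).
  by case: (HAB' (k - i)%N).
- apply: Zz_sum => i _; apply: Zz_muln; apply: Zz_add; apply: Zz_mul.
  + by case: (HAB i).
  + by case: (HAB' (k - i)%N).
  + exact: Zz_exp.
  + by case: (HAB' (k - i)%N).
- rewrite /ps_mul mulr_suml; apply: eq_bigr => i _.
  have ik : (i <= k)%N by rewrite -ltnS.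
  case: (HAB i) => _ _ -> _; case: (HAB' (k - i)%N) => _ _ -> _.
  have E : (k`! * q ^ k)%N = ('C(k, i) * ((i`! * q ^ i) * ((k - i)`! * q ^ (k - i))))%N.
    rewrite -(bin_fact ik).
    have -> : (q ^ k = q ^ i * q ^ (k - i))%N by rewrite -expnD subnKC.
    ring.
  rewrite E !natrM -mulr_natr.
  have c0 : ('C(k, i)%:R : cplx R) != 0 by rewrite pnatr_eq0 -lt0n bin_gt0.
  field.
  by rewrite c0 !fact_neq0 !natq_neq0.
- rewrite [x + y]addrC exprDn -sumrB mulr_sumr; apply: eq_bigr => i _.
  rewrite -mulrnBl mulrnAr; congr (_ *+ _).
  case: (HAB i) => _ _ _ E1; case: (HAB' (k - i)%N) => _ _ _ E2.
  have -> : A i * A' (k - i)%N - y ^+ (k - i) * x ^+ i =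
     (A i - x ^+ i) * A' (k - i)%N + x ^+ i * (A' (k - i)%N - y ^+ (k - i)) by ring.
  rewrite E1 E2; ring.
Qed.

Lemma Kb_factor (R : realType) p q (n : int) (c : cplx R) : prime q -> Zz R p c ->
  Kb R p q (binom_series R (n%:~R / q%:R) c) (- (n%:~R * c)).
Proof.
move=> pq Hc; have q0 := prime_gt0 pq; split.
  by apply: Zz_opp; apply: Zz_mul => //; exact: Zz_int.
have := fun k => prod_mod_q n k q.
move=> /(_ _) /dvdzP H.
have [M HM] := choice H.
exists (fun k => (\prod_(i < k) (n - (i * q)%N%:Z))%:~R * (- c) ^+ k).
exists (fun k => (M k)%:~R * (- c) ^+ k) => k; split.
- by apply: Zz_mul; [exact: Zz_int | apply: Zz_exp; exact: Zz_opp].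
- by apply: Zz_mul; [exact: Zz_int | apply: Zz_exp; exact: Zz_opp].
- by rewrite /binom_series binr_int // mulrAC.
- have E : ((\prod_(i < k) (n - (i * q)%N%:Z))%:~R : cplx R) = n%:~R ^+ k + (M k)%:~R * q%:R.
    have : \prod_(i < k) (n - (i * q)%N%:Z) = n ^+ k + M k * q%:Z by rewrite -HM; ring.
    by move=> ->; rewrite intrD intrM rmorphXn /=.
  rewrite E; have -> : - (n%:~R * c) = n%:~R * (- c) by ring.
  rewrite exprMn; ring.
Qed.

Definition Pr {R : realType} (a : R) (k : nat) : R :=
  (\prod_(i < k) (a + i%:R)) / (k`!)%:R.
Definition rmul {R : realType} (f g : nat -> R) (k : nat) : R :=
  \sum_(i < k.+1) f i * g (k - i)%N.
Definition Sr {R : realType} (a x : R) (N : nat) : R :=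
  \sum_(j < N) Pr a j * x ^+ j.

Lemma factR_gt0 (R : realType) k : (0 : R) < (k`!)%:R.
Proof. by rewrite ltr0n fact_gt0. Qed.

Lemma Pr_ge0 (R : realType) (a : R) k : 0 <= a -> 0 <= Pr a k.
Proof.
move=> a0; rewrite /Pr divr_ge0 // ?ler0n //.
by apply: prodr_ge0 => i _; rewrite addr_ge0 // ler0n.
Qed.

Lemma Pr0 (R : realType) (a : R) : Pr a 0 = 1.
Proof. by rewrite /Pr big_ord0 fact0 divr1. Qed.

Lemma Pr_zero (R : realType) k : Pr (0 : R) k = (k == 0%N)%:R.
Proof.
case: k => [|k]; first exact: Pr0.
by rewrite /Pr big_ord_recl /= add0r mul0r mul0r.
Qed.

Lemma Pr_rec (R : realType) (a : R) k :
  Pr a k.+1 * k.+1%:R = Pr a k * (a + k%:R).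
Proof.
rewrite /Pr big_ord_recr /= factS natrM.
have h1 : (k.+1%:R : R) != 0 by rewrite pnatr_eq0.
have h2 : ((k`!)%:R : R) != 0 by rewrite pnatr_eq0 -lt0n fact_gt0.
field; by rewrite h2 nat1r h1.
Qed.

Lemma prod_shift1 (R : realType) (a : R) k :
  \prod_(i < k.+1) (a + i%:R) = a * \prod_(i < k) ((a + 1) + i%:R).
Proof.
rewrite big_ord_recl /= addr0; congr (_ * _); apply: eq_bigr => i _.
by rewrite /bump /= -natr1 [in RHS]addrAC addrA.
Qed.

Lemma Pr_sum (R : realType) (a : R) k :
  Pr (a + 1) k.+1 = Pr a k.+1 + Pr (a + 1) k.
Proof.
set X := \prod_(i < k) (a + 1 + i%:R).
have E1 : \prod_(i < k.+1) (a + 1 + i%:R) = X * (a + 1 + k%:R) by rewrite big_ord_recr.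
have E2 : \prod_(i < k.+1) (a + i%:R) = a * X by exact: prod_shift1.
have h1 : (k%:R + 1 : R) != 0 by rewrite natr1 pnatr_eq0.
have h2 : ((k`!)%:R : R) != 0 by rewrite pnatr_eq0 -lt0n fact_gt0.
rewrite /Pr E1 E2 -/X factS natrM -natr1; field; by rewrite h1 h2.
Qed.

Lemma Pr_vdm (R : realType) (a b : R) k : rmul (Pr a) (Pr b) k = Pr (a + b) k.
Proof.
elim: k => [|k IH].
  by rewrite /rmul big_ord_recl big_ord0 !Pr0 mulr1 addr0.
have h1 : (k.+1%:R : R) != 0 by rewrite pnatr_eq0.
apply: (mulIf h1); rewrite Pr_rec -IH.
have E : rmul (Pr a) (Pr b) k.+1 * k.+1%:R =
  \sum_(i < k.+2) (Pr a i * i%:R) * Pr b (k.+1 - i)%N +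
  \sum_(i < k.+2) Pr a i * (Pr b (k.+1 - i)%N * (k.+1 - i)%N%:R).
  rewrite /rmul mulr_suml -big_split /=; apply: eq_bigr => i _.
  have ik : (i <= k.+1)%N by rewrite -ltnS.
  have -> : (k.+1%:R : R) = i%:R + (k.+1 - i)%N%:R by rewrite -natrD subnKC.
  ring.
rewrite E big_ord_recl /= mulr0 mul0r add0r.
rewrite [\sum_(i < k.+2) _]big_ord_recr /= subnn !mulr0 addr0.
rewrite /rmul mulr_suml -big_split /=; apply: eq_bigr => i _.
rewrite /bump /= add1n subSS.
have ik : (i <= k)%N by rewrite -ltnS.
rewrite (Pr_rec _ a i) (subSn ik) (Pr_rec _ b (k - i)) natrB //.
ring.
Qed.

Lemma sum_widen (R : realType) (F : nat -> R) N M : (forall i, 0 <= F i) -> (N <= M)%N ->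
  \sum_(i < N) F i <= \sum_(i < M) F i.
Proof.
move=> F0 NM; rewrite -(subnKC NM); elim: (M - N)%N => [|d IH]; first by rewrite addn0.
by rewrite addnS big_ord_recr /=; apply: (le_trans IH); rewrite lerDl.
Qed.

Lemma rmul_series (R : realType) (f g : nat -> R) (x : R) K :
  \sum_(k < K) rmul f g k * x ^+ k =
  \sum_(i < K) f i * x ^+ i * \sum_(j < K - i) g j * x ^+ j.
Proof.
elim: K => [|K IH]; first by rewrite !big_ord0.
rewrite big_ord_recr /= IH.
have E : forall i : 'I_K.+1, f i * x ^+ i * \sum_(j < K.+1 - i) g j * x ^+ j =
   f i * x ^+ i * \sum_(j < K - i) g j * x ^+ j + f i * g (K - i)%N * x ^+ K.
  move=> i; have iK : (i <= K)%N by rewrite -ltnS.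
  rewrite subSn // big_ord_recr /= mulrDr; congr (_ + _).
  by rewrite mulrCA -!mulrA -exprD subnKC // mulrCA.
rewrite (eq_bigr _ (fun i _ => E i)) big_split /=.
rewrite big_ord_recr /= subnn big_ord0 mulr0 addr0.
by rewrite /rmul mulr_suml.
Qed.

Lemma Sr_ge0 (R : realType) (a x : R) N : 0 <= a -> 0 <= x -> 0 <= Sr a x N.
Proof.
move=> a0 x0; rewrite /Sr; apply: sumr_ge0 => i _.
by rewrite mulr_ge0 ?Pr_ge0 ?exprn_ge0.
Qed.

Lemma Sr_prod (R : realType) (a b x : R) N M : 0 <= a -> 0 <= b -> 0 <= x ->
  Sr a x N * Sr b x M <= Sr (a + b) x (N + M).
Proof.
move=> a0 b0 x0.
have -> : Sr (a + b) x (N + M) = \sum_(k < N + M) rmul (Pr a) (Pr b) k * x ^+ k.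
  by apply: eq_bigr => k _; rewrite Pr_vdm.
rewrite /Sr.
rewrite rmul_series mulr_suml.
have T0 : forall i, 0 <= Pr a i * x ^+ i by move=> i; rewrite mulr_ge0 ?Pr_ge0 ?exprn_ge0.
have T1 : forall i, 0 <= Pr b i * x ^+ i by move=> i; rewrite mulr_ge0 ?Pr_ge0 ?exprn_ge0.
apply: (le_trans _ (@sum_widen _ (fun i => Pr a i * x ^+ i * \sum_(j < N + M - i) Pr b j * x ^+ j) N (N + M) _ _)).
- rewrite ler_sum // => i _; rewrite ler_wpM2l //.
  apply: (@sum_widen _ (fun j => Pr b j * x ^+ j)) => //.
  have iN := ltn_ord i.
  lia.
- by move=> i; rewrite mulr_ge0 // sumr_ge0.
- exact: leq_addr.
Qed.

Lemma Sr_step_eq (R : realType) (a x : R) N :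
  Sr a x N.+1 - (1 - x) * Sr (a + 1) x N.+1 = Pr (a + 1) N * x ^+ N.+1.
Proof.
elim: N => [|N IH].
  by rewrite /Sr !big_ord_recr !big_ord0 /= !Pr0 !add0r expr0 expr1; ring.
rewrite /Sr big_ord_recr /= [X in _ - (_ * X)]big_ord_recr /=.
have -> : \sum_(i < N.+1) Pr a i * x ^+ i + Pr a N.+1 * x ^+ N.+1 -
  (1 - x) * (\sum_(i < N.+1) Pr (a + 1) i * x ^+ i + Pr (a + 1) N.+1 * x ^+ N.+1) =
  (Sr a x N.+1 - (1 - x) * Sr (a + 1) x N.+1) + Pr a N.+1 * x ^+ N.+1
   - (1 - x) * Pr (a + 1) N.+1 * x ^+ N.+1 by rewrite /Sr; ring.
rewrite IH (Pr_sum _ a N) !exprS; ring.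
Qed.

Lemma Sr_step (R : realType) (a x : R) N : 0 <= a -> 0 <= x ->
  (1 - x) * Sr (a + 1) x N <= Sr a x N.
Proof.
move=> a0 x0; case: N => [|N]; first by rewrite /Sr !big_ord0 mulr0.
rewrite -subr_ge0 Sr_step_eq mulr_ge0 ?exprn_ge0 // Pr_ge0 //.
exact: addr_ge0.
Qed.

Lemma Sr_int (R : realType) (x : R) (u N : nat) : 0 <= x < 1 ->
  Sr u%:R x N * (1 - x) ^+ u <= 1.
Proof.
move=> /andP [x0 x1]; elim: u => [|u IH].
  rewrite expr0 mulr1 /Sr; case: N => [|N]; first by rewrite big_ord0.
  rewrite big_ord_recl Pr0 expr0 mulr1 big1 ?addr0 // => i _.
  by rewrite Pr_zero /bump /= mul0r.
rewrite exprSr mulrA -natr1 [_ * (1 - x)]mulrC.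
apply: le_trans IH; rewrite mulrA ler_wpM2r ?exprn_ge0 ?subr_ge0 ?(ltW x1) //.
by apply: Sr_step => //; rewrite ler0n.
Qed.

Lemma Sr_pow (R : realType) (a x : R) N j : 0 <= a -> 0 <= x ->
  Sr a x N ^+ j.+1 <= Sr (j.+1%:R * a) x (j.+1 * N).
Proof.
move=> a0 x0; elim: j => [|j IH]; first by rewrite expr1 mul1r mul1n.
rewrite exprS mulrC.
apply: (le_trans (y := Sr (j.+1%:R * a) x (j.+1 * N) * Sr a x N)).
  by rewrite ler_wpM2r ?Sr_ge0.
have -> : (j.+2%:R * a = j.+1%:R * a + a) by rewrite -nat1r [in RHS]addrC -nat1r mulrDl mul1r; ring.
rewrite [(j.+2 * N)%N]mulSn addnC.
by apply: Sr_prod => //; rewrite mulr_ge0 ?ler0n.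
Qed.

Lemma Sr_rat (R : realType) (x : R) (u q N : nat) : (0 < q)%N -> 0 <= x < 1 ->
  Sr (u%:R / q%:R) x N <= ((1 - x) `^ (u%:R / q%:R))^-1.
Proof.
move=> q0 /andP [x0 x1].
have a0 : 0 <= u%:R / q%:R :> R by rewrite divr_ge0 ?ler0n.
set a := u%:R / q%:R.
have qa : q%:R * a = u%:R :> R by rewrite /a mulrCA mulfV ?mulr1 // pnatr_eq0 -lt0n.
set y := (1 - x) `^ a.
have y0 : 0 < y by rewrite powR_gt0 // subr_gt0.
have yq : y ^+ q = (1 - x) ^+ u.
  rewrite -powR_mulrn ?powR_ge0 // -powRrM mulrC qa powR_mulrn // subr_ge0 ltW //.
have H1 : Sr a x N ^+ q <= ((1 - x) ^+ u)^-1.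
  rewrite -(prednK q0) (le_trans (Sr_pow _ _ _ _ _ a0 x0)) // prednK // qa.
  have := Sr_int _ x u (q * N) (introT andP (conj x0 x1)).
  have h : 0 < (1 - x) ^+ u by rewrite exprn_gt0 // subr_gt0.
  by rewrite -ler_pdivlMr // div1r.
rewrite -yq -exprVn in H1.
rewrite -(ler_pXn2r q0) // nnegrE; [exact: Sr_ge0 | by rewrite invr_ge0 (ltW y0)].
Qed.

Lemma Pr_split (R : realType) (a : R) m i : 0 <= a ->
  Pr a (m + i) <= Pr a m * Pr (a + m%:R) i.
Proof.
move=> a0; rewrite /Pr big_split_ord /=.
have -> : \prod_(j < i) (a + (m + j)%N%:R) = \prod_(j < i) (a + m%:R + j%:R).
  by apply: eq_bigr => j _; rewrite natrD addrA.
set X := \prod_(j < m) (a + j%:R); set Y := \prod_(j < i) (a + m%:R + j%:R).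
have X0 : 0 <= X by apply: prodr_ge0 => j _; rewrite addr_ge0 ?ler0n.
have Y0 : 0 <= Y by apply: prodr_ge0 => j _; rewrite !addr_ge0 ?ler0n.
rewrite mulrACA -invfM -natrM ler_wpM2l ?mulr_ge0 //.
rewrite lef_pV2 ?posrE ?ltr0n ?muln_gt0 ?fact_gt0 // ler_nat.
rewrite -(bin_fact (leq_addr i m)) addKn.
by rewrite leq_pmull // bin_gt0 leq_addr.
Qed.

Lemma tail_bound (R : realType) (x : R) (u q k N : nat) : (0 < q)%N -> 0 <= x < 1 ->
  \sum_(i < N) Pr (u%:R / q%:R) (k.+1 + i) * x ^+ (k.+1 + i)
  <= Pr (u%:R / q%:R) k.+1 * x ^+ k.+1 / (1 - x) `^ (u%:R / q%:R + k.+1%:R).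
Proof.
move=> q0 /andP [x0 x1].
set a := u%:R / q%:R.
have a0 : 0 <= a by rewrite divr_ge0 ?ler0n.
have E : a + k.+1%:R = (u + k.+1 * q)%N%:R / q%:R.
  rewrite natrD natrM /a; field; by rewrite pnatr_eq0 -lt0n.
apply: (le_trans (y := \sum_(i < N) Pr a k.+1 * x ^+ k.+1 * (Pr (a + k.+1%:R) i * x ^+ i))).
  apply: ler_sum => i _; rewrite exprD.
  have := Pr_split _ _ k.+1 i a0 => h.
  by rewrite [in X in _ <= X]mulrACA ler_wpM2r ?mulr_ge0 ?exprn_ge0.
rewrite -mulr_sumr ler_wpM2l ?(mulr_ge0 (Pr_ge0 _ _ a0) (exprn_ge0 _ x0)) //.
  by rewrite mulr_ge0 ?Pr_ge0 ?exprn_ge0.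
rewrite E; apply: (Sr_rat _ x _ _ N q0); by rewrite x0 x1.
Qed.
Section CplxPart.
Local Open Scope complex_scope.
Local Open Scope classical_set_scope.

Lemma normcC (R : realType) (z : cplx R) : `|z| = (Normc.normc z)%:C.
Proof. by case: z => a b; rewrite normc_def. Qed.

Lemma normc_real (R : realType) (y : R) : Normc.normc (y%:C : cplx R) = `|y|.
Proof. by rewrite /= expr0n /= addr0 sqrtr_sqr. Qed.

Lemma normcN' (R : realType) (z : cplx R) : Normc.normc (- z) = Normc.normc z.
Proof. by case: z => a b; rewrite /= !sqrrN. Qed.

Lemma normcX (R : realType) (z : cplx R) k : Normc.normc (z ^+ k) = Normc.normc z ^+ k.
Proof.
elim: k => [|k IH]; first by rewrite !expr0 Normc.normc1.
by rewrite !exprS Normc.normcM IH.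
Qed.

Lemma normc_ge0 (R : realType) (z : cplx R) : 0 <= Normc.normc z.
Proof. by case: z => a b; rewrite /= sqrtr_ge0. Qed.

Lemma normcD (R : realType) (z w : cplx R) : Normc.normc (z + w) <= Normc.normc z + Normc.normc w.
Proof.
have := ler_normD z w; rewrite !normcC -rmorphD /=.
by rewrite lecR.
Qed.

Lemma normc_sum (R : realType) (I : Type) (r : seq I) (P : pred I) (F : I -> cplx R) :
  Normc.normc (\sum_(i <- r | P i) F i) <= \sum_(i <- r | P i) Normc.normc (F i).
Proof.
elim/big_ind2: _ => //.
- by rewrite Normc.normc0.
- by move=> x1 x2 y1 y2 h1 h2; apply: (le_trans (normcD _ _ _)); apply: lerD.
Qed.

Lemma normc_le_ReIm (R : realType) (a b : R) : Normc.normc (a +i* b) <= `|a| + `|b|.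
Proof.
have -> : Normc.normc (a +i* b : cplx R) = Num.sqrt (a ^+ 2 + b ^+ 2) by [].
have ab0 : 0 <= `|a| + `|b| by rewrite addr_ge0.
apply: (le_trans (y := Num.sqrt ((`|a| + `|b|) ^+ 2))); last by rewrite sqrtr_sqr ger0_norm.
rewrite ler_sqrt ?sqr_ge0 //.
have ha : a ^+ 2 = `|a| ^+ 2 by rewrite real_normK ?num_real.
have hb : b ^+ 2 = `|b| ^+ 2 by rewrite real_normK ?num_real.
rewrite ha hb sqrrD.
have := mulr_ge0 (normr_ge0 a) (normr_ge0 b); set u := `|a|; set v := `|b|.
rewrite mulr2n; lra.
Qed.

Lemma cvgC (R : realType) (x y : nat -> R) (a b : R) :
  x n @[n --> \oo] --> a -> y n @[n --> \oo] --> b ->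
  ((x n +i* y n : cplx R) @[n --> \oo] --> (a +i* b : cplx R)).
Proof.
move=> /cvgrPdist_lt Hx /cvgrPdist_lt Hy.
apply/cvgrPdist_lt; case=> er ei e0.
have ei0 : ei = 0 by move: e0; rewrite ltcE => /andP [/eqP H _].
have e0' : 0 < er by move: e0; rewrite ltcE => /andP [_].
subst ei.
have e2 : 0 < er / 2 by rewrite divr_gt0.
apply: filterS2 (Hx _ e2) (Hy _ e2) => n h1 h2.
rewrite normcC.
have -> : (er +i* 0 : cplx R) = er%:C by [].
rewrite ltcR.
have -> : (a +i* b : cplx R) - (x n +i* y n) = (a - x n) +i* (b - y n) by [].
apply: (le_lt_trans (normc_le_ReIm _ _ _)).
by rewrite (splitr er) ltrD.
Qed.

Definition cre {R : realType} (z : cplx R) : R := let: a +i* _ := z in a.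
Definition cim {R : realType} (z : cplx R) : R := let: _ +i* b := z in b.

Lemma cre_le (R : realType) (z : cplx R) : `|cre z| <= Normc.normc z.
Proof.
case: z => a b /=.
rewrite -sqrtr_sqr ler_sqrt ?addr_ge0 ?sqr_ge0 // lerDl sqr_ge0 //.
Qed.

Lemma cim_le (R : realType) (z : cplx R) : `|cim z| <= Normc.normc z.
Proof.
case: z => a b /=.
rewrite -sqrtr_sqr ler_sqrt ?addr_ge0 ?sqr_ge0 // lerDr sqr_ge0 //.
Qed.

Lemma real_dom_cvg (R : realType) (r w : nat -> R) (B : R) :
  (forall j, `|r j| <= w j) -> (forall N, \sum_(j < N) w j <= B) -> cvgn (series r).
Proof.
move=> rw wB.
have w0 : forall j, 0 <= w j by move=> j; exact: le_trans (normr_ge0 _) (rw j).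
have c1 : cvgn (series (fun j => r j + w j)).
  apply: nondecreasing_is_cvgn.
    apply: nondecreasing_series => n _ _.
    have h1 := ler_norm (- r n); rewrite normrN in h1; have h2 := rw n; lra.
  exists (B *+ 2) => _ [n _ <-].
  rewrite /series /= big_mkord.
  apply: (le_trans (y := \sum_(j < n) (w j *+ 2))).
    by apply: ler_sum => j _; rewrite mulr2n lerD2r (le_trans (ler_norm _)).
  by rewrite sumrMnl lerMn2r wB orbT.
have c2 : cvgn (series w).
  apply: nondecreasing_is_cvgn.
    by apply: nondecreasing_series => n _ _; exact: w0.
  by exists B => _ [n _ <-]; rewrite /series /= big_mkord.
have -> : series r = (fun n => series (fun j => r j + w j) n - series w n).
  apply/funext => n; rewrite /series /= -sumrB; apply: eq_bigr => j _.
  by rewrite addrK.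
exact: (is_cvgB c1 c2).
Qed.

Lemma series_ReIm (R : realType) (u : nat -> cplx R) n :
  series u n = (series (fun j => cre (u j)) n) +i* (series (fun j => cim (u j)) n).
Proof.
rewrite /series /= !big_mkord.
elim: n => [|n IH]; first by rewrite !big_ord0.
by rewrite !big_ord_recr /= IH; case: (u n).
Qed.

Lemma cplx_dom_cvg (R : realType) (u : nat -> cplx R) (w : nat -> R) (B : R) :
  (forall j, Normc.normc (u j) <= w j) -> (forall N, \sum_(j < N) w j <= B) ->
  cvgn (series u).
Proof.
move=> uw wB.
have cr : cvgn (series (fun j => cre (u j))).
  by apply: (@real_dom_cvg _ _ w B) => // j; exact: le_trans (cre_le _ _) (uw j).
have ci : cvgn (series (fun j => cim (u j))).
  by apply: (@real_dom_cvg _ _ w B) => // j; exact: le_trans (cim_le _ _) (uw j).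
apply: cvgP.
have -> : series u = fun n => (series (fun j => cre (u j)) n) +i* (series (fun j => cim (u j)) n).
  by apply/funext => n; exact: series_ReIm.
exact: cvgC cr ci.
Qed.

Lemma binr_C (R : realType) (r : R) k : binr (r%:C : cplx R) k = (binr r k)%:C.
Proof.
rewrite /binr fmorph_div rmorph_prod rmorph_nat; congr (_ / _).
by apply: eq_bigr => i _; rewrite rmorphB rmorph_nat.
Qed.

Lemma binr_norm (R : realType) (r : R) k : `|binr r k| <= Pr `|r| k.
Proof.
rewrite /binr /Pr normrM normfV normr_nat ler_wpM2r ?invr_ge0 ?ler0n //.
rewrite normr_prod; apply: ler_prod => i _; rewrite normr_ge0 /=.
by rewrite (le_trans (ler_normB _ _)) // normr_nat.
Qed.

Lemma binom_maj (R : realType) (r : R) (c : cplx R) k : Normc.normc c = 1 ->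
  Normc.normc (binom_series R (r%:C) c k) <= Pr `|r| k.
Proof.
move=> c1; rewrite /binom_series Normc.normcM normcX normcN' c1 expr1n mulr1.
by rewrite binr_C normc_real binr_norm.
Qed.

Lemma ps_maj (R : realType) (f g : nat -> cplx R) (a b : R) : 0 <= a -> 0 <= b ->
  (forall k, Normc.normc (f k) <= Pr a k) -> (forall k, Normc.normc (g k) <= Pr b k) ->
  forall k, Normc.normc (ps_mul R f g k) <= Pr (a + b) k.
Proof.
move=> a0 b0 hf hg k; rewrite -Pr_vdm /ps_mul /rmul.
apply: (le_trans (normc_sum _ _ _ _ _)); apply: ler_sum => i _.
rewrite Normc.normcM; apply: ler_pM => //; exact: normc_ge0.
Qed.

Lemma intq_C (R : realType) (z : int) (q : nat) :
  ((z%:~R / q%:R) : cplx R) = ((z%:~R / q%:R : R))%:C.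
Proof. by rewrite fmorph_div rmorph_nat rmorph_int. Qed.

Lemma Fser_maj (R : realType) (p q : nat) (n : 'I_p -> int) (s : nat) :
  forall k, Normc.normc (Fser R p q n s k) <=
            Pr (\sum_(a < p | (0 < a)%N) `|(n a)%:~R / q%:R : R|) k.
Proof.
suff : 0 <= \sum_(a < p | (0 < a)%N) `|(n a)%:~R / q%:R : R| /\
  forall k, Normc.normc (Fser R p q n s k) <= Pr (\sum_(a < p | (0 < a)%N) `|(n a)%:~R / q%:R : R|) k.
  by case.
rewrite /Fser.
apply: (big_ind2 (fun (f : nat -> cplx R) (a : R) => 0 <= a /\ forall k, Normc.normc (f k) <= Pr a k)).
- split => // k; rewrite Pr_zero /ps_one.
  by case: (k == 0%N); rewrite ?Normc.normc1 ?Normc.normc0.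
- move=> f1 a1 f2 a2 [h1 h1'] [h2 h2']; split; first exact: addr_ge0.
  exact: ps_maj.
- move=> a _; split => // k; rewrite intq_C; apply: binom_maj.
  by rewrite normc_zetaX.
Qed.

Lemma lim_bound (R : realType) (u : nat -> cplx R) (S : cplx R) (Bd : R) (K : nat) :
  cvgn (series u) -> (forall N, Normc.normc (series u (K + N)%N - S) <= Bd) ->
  Normc.normc (limn (series u) - S) <= Bd.
Proof.
move=> cu hB; apply/ler_addgt0Pr => e e0.
have e0' : (0 : cplx R) < e%:C by rewrite ltcR.
have /cvgrPdist_lt H0 := cu; have Hc := H0 _ e0'.
have Hb : \forall m \near \oo, (`|limn (series u) - series u m| < e%:C) /\ (K <= m)%N.
  by apply: filterS2 Hc (nbhs_infty_ge K) => m h1 h2; split.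
have [n [hn1 hn2]] := filter_ex Hb.
have E : limn (series u) - S = (limn (series u) - series u n) + (series u n - S).
  by rewrite addrA subrK.
rewrite E; apply: (le_trans (normcD _ _ _)); rewrite addrC; apply: lerD.
  by rewrite -(subnKC hn2).
by move: hn1; rewrite normcC ltcR => /ltW.
Qed.

Lemma series_split (R : realType) (u : nat -> cplx R) (K N : nat) :
  series u (K + N)%N - \sum_(j < K) u j = \sum_(i < N) u (K + i)%N.
Proof.
by rewrite /series /= big_mkord big_split_ord /= addrAC subrr add0r.
Qed.
End CplxPart.

Lemma Fser_b (R : realType) (p q : nat) (n : 'I_p -> int) : prime q ->
  Kb R p q (Fser R p q n 1) (\sum_(a < p | (0 < a)%N) - ((n a)%:~R * zeta R p ^+ (1 * a))).
Proof.
move=> pq; have q0 := prime_gt0 pq; rewrite /Fser.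
apply: (big_ind2 (Kb R p q)).
- exact: Kb_one.
- by move=> f x g y hf hg; apply: Kb_mul.
- by move=> a _; apply: Kb_factor => //; apply: Zz_exp; exact: Zz_zeta.
Qed.
Theorem proposition3 (R : realType) (p q : nat) (n : 'I_p -> int) :
  prime p -> prime q -> odd p -> odd q -> p != q ->
  (* (a) *)
  (forall k : nat, exists (a : cplx R) (s : nat),
     inZzeta R p a /\ Fser R p q n 1 k = a / (q ^ s)%:R) /\
  (* (b) *)
  (forall k : nat, exists ak : cplx R,
     inZzeta R p ak /\ Fser R p q n 1 k = ak / (k`! * q ^ k)%:R /\
     exists b : cplx R, inZzeta R p b /\
       ak - (- \sum_(a < p | (0 < a)%N) (n a)%:~R * zeta R p ^+ a) ^+ k
         = q%:R * b) /\
  (* (c) *)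
  (forall (s : 'I_p) (t : cplx R), (0 < s)%N -> Normc.normc t < 1 ->
     cvgn (series (fun k => Fser R p q n s k * t ^+ k)) /\
     ((forall a : 'I_p, (0 < a)%N -> 0 <= n a <= q%:Z) ->
      let m : R := (\sum_(a < p | (0 < a)%N) (n a)%:~R) / q%:R in
      forall k : nat,
        Normc.normc (limn (series (fun j => Fser R p q n s j * t ^+ j))
               - \sum_(j < k.+1) Fser R p q n s j * t ^+ j)
        <= `|binr (- m) k.+1| * Normc.normc t ^+ k.+1
             / (1 - Normc.normc t) `^ (m + k.+1%:R))).
Proof.
move=> pp pq op oq pneq.
have p0 := prime_gt0 pp; have q0 := prime_gt0 pq.
split; [|split].
- move=> k; have [a [s [Ha ->]]] := Fser_a R p q n 1 pq k.
  by exists a, s; split => //; apply: Zz_inZzeta.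
- move=> k.
  have [_ [A [B H]]] := Fser_b R p q n pq.
  case: (H k) => HA HB Hf HAB.
  exists (A k); split; first exact: Zz_inZzeta.
  split => //.
  exists (B k); split; first exact: Zz_inZzeta.
  rewrite -HAB; congr (_ - _ ^+ _).
  by rewrite -sumrN; apply: eq_bigr => a _; rewrite mul1n.
- move=> s t s0 t1.
  set x := Normc.normc t.
  have x0 : 0 <= x by exact: normc_ge0.
  have xb : 0 <= x < 1 by rewrite x0 t1.
  set U := (\sum_(a < p | (0 < a)%N) `|n a|%N)%N.
  have MU : \sum_(a < p | (0 < a)%N) `|(n a)%:~R / q%:R : R| = U%:R / q%:R.
    rewrite /U natr_sum mulr_suml; apply: eq_bigr => a _.
    rewrite normrM normfV normr_nat -intr_norm -abszE.
    by rewrite -pmulrn.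
  set M := \sum_(a < p | (0 < a)%N) `|(n a)%:~R / q%:R : R|.
  have hu : forall j, Normc.normc (Fser R p q n s j * t ^+ j) <= Pr M j * x ^+ j.
    move=> j; rewrite Normc.normcM normcX ler_wpM2r ?exprn_ge0 //.
    exact: Fser_maj.
  have cu : cvgn (series (fun j => Fser R p q n s j * t ^+ j)).
    apply: (cplx_dom_cvg _ _ (fun j => Pr M j * x ^+ j) ((1 - x) `^ M)^-1) => // N.
    rewrite /M MU; exact: (Sr_rat _ x U q N q0 xb).
  split => // hn m k.
  have mU : m = U%:R / q%:R.
    rewrite /m /U natr_sum !mulr_suml; apply: eq_bigr => a Ha; congr (_ / _).
    have /andP [h0 _] := hn a Ha.
    by rewrite -[in LHS](gez0_abs h0) -pmulrn.
  have MM : M = m by rewrite /M MU mU.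
  have m0 : 0 <= m by rewrite mU divr_ge0 ?ler0n.
  have Pbin : `|binr (- m) k.+1| = Pr m k.+1.
    rewrite /binr /Pr normrM normfV normr_nat normr_prod; congr (_ / _).
    apply: eq_bigr => i _.
    by rewrite -opprD normrN ger0_norm // addr_ge0 ?ler0n.
  rewrite Pbin.
  apply: (lim_bound _ _ _ _ k.+1 cu) => N.
  rewrite series_split; apply: (le_trans (normc_sum _ _ _ _ _)).
  apply: (le_trans (y := \sum_(i < N) Pr m (k.+1 + i) * x ^+ (k.+1 + i))).
    by apply: ler_sum => i _; rewrite -MM; exact: hu.
  rewrite mU; exact: tail_bound.
Qed.
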